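(* Let $\kappa$ be a regular uncountable cardinal, $I$ an ideal on $\kappa$, and $L=\{\lambda+1:\lambda<\kappa \text{ a limit ordinal}\}$. If $L\in I$, then the pleasant closure $P(I)$ contains $NS_\kappa$, and hence $P(I)$ is normal.
   Context: An ideal on $\kappa$ is a family of subsets of $\kappa$ closed under subsets and finite unions, which is $<\kappa$-complete and contains all singletons. $NS_\kappa$ is the ideal of nonstationary subsets of $\kappa$. For $A\subseteq\kappa$ and $X_\alpha\subseteq\kappa$, $\bigtriangledown_{\alpha\in A}X_\alpha=\{\xi<\kappa:\exists\alpha<\xi\,(\alpha\in A\wedge \xi\in X_\alpha)\}$. An ideal is normal if $X_\alpha$ in it for all $\alpha<\kappa$ implies $\bigtriangledown_{\alpha<\kappa}X_\alpha$ is in it; it is pleasant if whenever $A$ and all $X_\alpha$ are in it, so is $\bigtriangledown_{\alpha\in A}X_\alpha$. The pleasant closure $P(I)$ is the smallest pleasant ideal containing $I$ (obtained by iterating, transfinitely, the operation of adding diagonal unions $\bigtriangledown_{\alpha\in T}X_\alpha$ with $T\in I$ and the $X_\alpha$ from the previous stage, taking unions at limits). *)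

(* Defs.v *)
(* The regular uncountable cardinal kappa is modelled as a type K
   carrying a strict well-order [lt] (elements of K = ordinals below kappa),
   which is an initial ordinal (a cardinal), regular and uncountable. *)

Section KappaDefs.
Context {K : Type} (lt : K -> K -> Prop).

Definition le (x y : K) : Prop := lt x y \/ x = y.

Definition strict_wellorder : Prop :=
  (forall x, ~ lt x x) /\
  (forall x y z, lt x y -> lt y z -> lt x z) /\
  (forall x y, lt x y \/ x = y \/ lt y x) /\
  well_founded lt.

End KappaDefs.

Definition injects (A B : Type) : Prop :=
  exists f : A -> B, forall x y, f x = f y -> x = y.

Section KappaDefs2.
Context {K : Type} (lt : K -> K -> Prop).

Definition initial_ordinal : Prop :=
  forall a : K, ~ injects K {x : K | lt x a}.

Definition unbounded (X : K -> Prop) : Prop :=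
  forall a, exists x, X x /\ le lt a x.

(* regular cardinal: cofinality kappa, i.e. every unbounded subset has size kappa *)
Definition regular_cardinal : Prop :=
  initial_ordinal /\ forall X, unbounded X -> injects K {x : K | X x}.

Definition uncountable : Prop := ~ injects K nat.

Definition is_succ (y x : K) : Prop :=
  lt x y /\ forall z, lt x z -> le lt y z.

(* limit ordinal: nonzero and not a successor *)
Definition is_limit (l : K) : Prop :=
  (exists z, lt z l) /\ forall z, lt z l -> exists w, lt z w /\ lt w l.

Definition closed (C : K -> Prop) : Prop :=
  forall a, is_limit a ->
    (forall z, lt z a -> exists c, C c /\ le lt z c /\ lt c a) -> C a.

Definition club (C : K -> Prop) : Prop := closed C /\ unbounded C.

Definition nonstationary (X : K -> Prop) : Prop :=
  exists C, club C /\ forall x, C x -> ~ X x.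

Definition is_ideal (I : (K -> Prop) -> Prop) : Prop :=
  (forall X Y : K -> Prop, I Y -> (forall x, X x -> Y x) -> I X) /\
  (forall X Y : K -> Prop, I X -> I Y -> I (fun x => X x \/ Y x)) /\
  (forall (a : K) (F : K -> K -> Prop),
      (forall b, lt b a -> I (F b)) -> I (fun x => exists b, lt b a /\ F b x)) /\
  (forall a : K, I (fun x => x = a)).

Definition diag_union (A : K -> Prop) (Xf : K -> K -> Prop) : K -> Prop :=
  fun xi => exists a, lt a xi /\ A a /\ Xf a xi.

Definition normal_ideal (I : (K -> Prop) -> Prop) : Prop :=
  forall Xf : K -> K -> Prop, (forall a, I (Xf a)) -> I (diag_union (fun _ => True) Xf).

Definition pleasant (I : (K -> Prop) -> Prop) : Prop :=
  forall (A : K -> Prop) (Xf : K -> K -> Prop),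
    I A -> (forall a, I (Xf a)) -> I (diag_union A Xf).

Definition pleasant_closure (I : (K -> Prop) -> Prop) : (K -> Prop) -> Prop :=
  fun X => forall J : (K -> Prop) -> Prop,
    is_ideal J -> pleasant J -> (forall Y, I Y -> J Y) -> J X.

Definition L_set : K -> Prop :=
  fun y => exists l, is_limit l /\ is_succ y l.

End KappaDefs2.

(* Main.v *)
Require Import Defs.
From Stdlib Require Import Classical ClassicalEpsilon.

Lemma wf_min (K : Type) (lt : K -> K -> Prop) (Hwo : strict_wellorder lt)
  (P : K -> Prop) (x : K) : P x -> exists m, P m /\ forall u, P u -> ~ lt u m.
Proof.
  destruct Hwo as [_ [_ [_ Hwf]]].
  revert x. intros x; induction (Hwf x) as [x _ IH]; intros Px.
  destruct (classic (exists u, P u /\ lt u x)) as [[u [Pu Hu]]|Hn].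
  - exact (IH u Hu Pu).
  - exists x; split; [exact Px|]. intros u Pu Hu; apply Hn; eauto.
Qed.

Lemma succ_ex (K : Type) (lt : K -> K -> Prop) (Hwo : strict_wellorder lt)
  (x y : K) : lt x y -> exists s, is_succ lt s x.
Proof.
  intros H. destruct (wf_min K lt Hwo (fun u => lt x u) y H) as [m [Hm Hmin]].
  exists m; split; [exact Hm|]. intros z Hz.
  destruct Hwo as [_ [_ [Htri _]]].
  destruct (Htri m z) as [h|[h|h]]; [left; exact h|right; exact h|].
  exfalso; exact (Hmin z Hz h).
Qed.

Lemma no_max (K : Type) (lt : K -> K -> Prop) (Hwo : strict_wellorder lt)
  (Hreg : regular_cardinal lt) (Hunc : uncountable (K := K)) :
  forall x, exists y, lt x y.
Proof.
  intros x. apply NNPP; intros Hn.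
  assert (Hu : unbounded lt (fun y => y = x)).
  { intros a. exists x; split; [reflexivity|].
    destruct Hwo as [_ [_ [Htri _]]].
    destruct (Htri a x) as [h|[h|h]]; [left; exact h|right; exact h|].
    exfalso; apply Hn; eauto. }
  destruct Hreg as [_ Hr]. destruct (Hr _ Hu) as [f Hf].
  apply Hunc. exists (fun _ => 0). intros a b _. apply Hf.
  destruct (f a) as [fa ha]; destruct (f b) as [fb hb].
  subst. f_equal; try apply proof_irrelevance.
Qed.

Lemma lim_unb (K : Type) (lt : K -> K -> Prop) (Hwo : strict_wellorder lt)
  (Hreg : regular_cardinal lt) (Hunc : uncountable (K := K)) :
  forall a, exists l, is_limit lt l /\ lt a l.
Proof.
  assert (Hs : forall x, exists s, is_succ lt s x).
  { intros x. destruct (no_max K lt Hwo Hreg Hunc x) as [y Hy].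
    exact (succ_ex K lt Hwo x y Hy). }
  destruct (choice _ Hs) as [sf Hsf].
  intros a.
  set (f := fun n => Nat.iter n sf a).
  assert (Hfs : forall n, f (S n) = sf (f n)) by reflexivity.
  destruct Hwo as [Hirr [Htr [Htri Hwf]]] eqn:E.
  assert (Hb : exists b, forall n, lt (f n) b).
  { apply NNPP; intros Hn.
    assert (Hu : unbounded lt (fun y => exists n, f n = y)).
    { intros c. apply NNPP; intros Hc. apply Hn. exists c. intros n.
      destruct (Htri (f n) c) as [h|[h|h]]; [exact h| |];
      exfalso; apply Hc; exists (f n); split; eauto;
        [right; symmetry; exact h | left; exact h]. }
    destruct Hreg as [_ Hr]. destruct (Hr _ Hu) as [g Hg].
    apply Hunc.
    assert (Hch : forall y : {x : K | exists n, f n = x}, exists n, f n = proj1_sig y).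
    { intros [y hy]; exact hy. }
    destruct (choice _ Hch) as [h Hh].
    exists (fun k => h (g k)). intros k1 k2 Heq. apply Hg.
    assert (Hp : proj1_sig (g k1) = proj1_sig (g k2)).
    { pose proof (Hh (g k1)); pose proof (Hh (g k2)); congruence. }
    destruct (g k1) as [y1 p1]; destruct (g k2) as [y2 p2]. simpl in Hp. subst.
    f_equal; apply proof_irrelevance. }
  destruct Hb as [b Hb].
  destruct (wf_min K lt Hwo (fun u => forall n, lt (f n) u) b Hb) as [l [Hl Hmin]].
  exists l. split; [|exact (Hl 0)].
  split; [exists a; exact (Hl 0)|].
  intros y Hy.
  assert (Hny : ~ forall n, lt (f n) y) by (intros H; exact (Hmin y H Hy)).
  apply not_all_ex_not in Hny. destruct Hny as [n Hn].
  exists (f (S n)). split; [|exact (Hl (S n))].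
  rewrite Hfs. destruct (Hsf (f n)) as [h1 _].
  destruct (Htri (f n) y) as [h|[h|h]]; [contradiction| rewrite <- h; exact h1|].
  exact (Htr _ _ _ h h1).
Qed.

Lemma bounded_J (K : Type) (lt : K -> K -> Prop) (J : (K -> Prop) -> Prop)
  (HJ : is_ideal lt J) (c : K) : J (fun x => le lt x c).
Proof.
  destruct HJ as [Hsub [Hun [Hcomp Hsing]]].
  apply (Hsub _ (fun x => (exists b, lt b c /\ x = b) \/ x = c)).
  - apply Hun; [|apply Hsing]. apply (Hcomp c (fun b x => x = b)). intros; apply Hsing.
  - intros x [h|h]; [left; exists x; auto|right; exact h].
Qed.

Lemma empty_J (K : Type) (lt : K -> K -> Prop) (J : (K -> Prop) -> Prop)
  (HJ : is_ideal lt J) (HL : J (L_set lt)) : J (fun _ => False).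
Proof. destruct HJ as [Hsub _]. apply (Hsub _ _ HL). intros x []. Qed.

Lemma succ_J (K : Type) (lt : K -> K -> Prop) (Hwo : strict_wellorder lt)
  (Hreg : regular_cardinal lt) (Hunc : uncountable (K := K))
  (J : (K -> Prop) -> Prop) (HJ : is_ideal lt J) (Hp : pleasant lt J) (HL : J (L_set lt)) :
  J (fun xi => exists z, is_succ lt xi z).
Proof.
  pose proof Hwo as [Hirr [Htr [Htri Hwf]]].
  pose proof HJ as [Hsub [Hun _]].
  set (F := fun x => forall l, is_limit lt l -> ~ lt l x).
  set (Yf := fun a x => forall l, is_limit lt l -> lt l x -> lt l a).
  assert (HF : J F).
  { destruct (classic (exists k : K, True)) as [[k _]|Hn].
    - destruct (lim_unb K lt Hwo Hreg Hunc k) as [l0 [Hl0 _]].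
      apply (Hsub _ _ (bounded_J K lt J HJ l0)). intros x Hx.
      destruct (Htri x l0) as [h|[h|h]]; [left; exact h|right; exact h|].
      exfalso; exact (Hx l0 Hl0 h).
    - apply (Hsub _ _ (empty_J K lt J HJ HL)). intros x _; apply Hn; eauto. }
  assert (HY : forall a, J (Yf a)).
  { intros a. destruct (lim_unb K lt Hwo Hreg Hunc a) as [l0 [Hl0 Ha]].
    apply (Hsub _ _ (bounded_J K lt J HJ l0)). intros x Hx.
    destruct (Htri x l0) as [h|[h|h]]; [left; exact h|right; exact h|].
    exfalso. pose proof (Hx l0 Hl0 h). exact (Hirr a (Htr _ _ _ Ha H)). }
  apply (Hsub _ (fun x => (L_set lt x \/ F x) \/ diag_union lt (L_set lt) Yf x)).
  { apply Hun; [apply Hun; assumption|]. apply Hp; assumption. }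
  intros xi [z [Hzx Hzs]].
  destruct (classic (is_limit lt z)) as [Hzl|Hzl].
  { left; left; exists z; split; [exact Hzl|split; assumption]. }
  destruct (classic (F xi)) as [HFx|HFx]; [left; right; exact HFx|].
  right.
  assert (Hex : exists l0, is_limit lt l0 /\ lt l0 xi).
  { apply NNPP; intros Hn; apply HFx; intros l Hl Hlx; apply Hn; eauto. }
  destruct Hex as [l0 [Hl0 Hl0x]].
  set (U := fun u => forall l, is_limit lt l -> lt l xi -> le lt l u).
  assert (Uz : U z).
  { intros l Hl Hlx. destruct (Htri l z) as [h|[h|h]]; [left; exact h|right; exact h|].
    exfalso. destruct (Hzs l h) as [h'|h']; [exact (Hirr _ (Htr _ _ _ h' Hlx))|subst; exact (Hirr _ Hlx)]. }
  destruct (wf_min K lt Hwo U z Uz) as [mu [Umu Hmin]].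
  assert (Hmul : is_limit lt mu).
  { destruct (Umu l0 Hl0 Hl0x) as [h|h]; [|subst; exact Hl0].
    destruct (classic (is_limit lt mu)) as [Hm|Hm]; [exact Hm|].
    split; [exists l0; exact h|].
    intros y Hy.
    assert (Hny : ~ U y) by (intros H; exact (Hmin y H Hy)).
    apply NNPP; intros Hn. apply Hny. intros l Hl Hlx.
    destruct (Htri l y) as [h1|[h1|h1]]; [left; exact h1|right; exact h1|].
    destruct (Umu l Hl Hlx) as [h2|h2]; [exfalso; apply Hn; eauto|subst; contradiction]. }
  assert (Hmz : lt mu z).
  { destruct (Htri mu z) as [h|[h|h]]; [exact h|subst; contradiction|].
    exfalso; exact (Hmin z Uz h). }
  destruct (succ_ex K lt Hwo mu z Hmz) as [s [Hms Hss]].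
  exists s. split.
  { destruct (Hss z Hmz) as [h|h]; [exact (Htr _ _ _ h Hzx)|subst; exact Hzx]. }
  split; [exists mu; split; [exact Hmul|split; assumption]|].
  intros l Hl Hlx. destruct (Umu l Hl Hlx) as [h|h]; [exact (Htr _ _ _ h Hms)|subst; exact Hms].
Qed.

Lemma ns_J (K : Type) (lt : K -> K -> Prop) (Hwo : strict_wellorder lt)
  (Hreg : regular_cardinal lt) (Hunc : uncountable (K := K))
  (J : (K -> Prop) -> Prop) (HJ : is_ideal lt J) (Hp : pleasant lt J) (HL : J (L_set lt)) :
  forall X, nonstationary lt X -> J X.
Proof.
  intros X [C [[Hcl Hcu] HCX]].
  pose proof Hwo as [Hirr [Htr [Htri Hwf]]].
  pose proof HJ as [Hsub [Hun _]].
  pose proof (succ_J K lt Hwo Hreg Hunc J HJ Hp HL) as HS.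
  set (M := fun x => forall z, ~ lt z x).
  set (Xf := fun a x => forall c, C c -> lt c x -> lt c a).
  assert (HM : J M).
  { destruct (classic (exists m, M m)) as [[m Hm]|Hn].
    - apply (Hsub _ _ (bounded_J K lt J HJ m)). intros x Hx. right.
      destruct (Htri x m) as [h|[h|h]]; [exfalso; exact (Hm x h)|exact h|exfalso; exact (Hx m h)].
    - apply (Hsub _ _ (empty_J K lt J HJ HL)). intros x Hx; apply Hn; eauto. }
  assert (HX : forall a, J (Xf a)).
  { intros a. destruct (Hcu a) as [c0 [Hc0 Hac]].
    apply (Hsub _ _ (bounded_J K lt J HJ c0)). intros x Hx.
    destruct (Htri x c0) as [h|[h|h]]; [left; exact h|right; exact h|].
    exfalso. pose proof (Hx c0 Hc0 h).
    destruct Hac as [h'|h']; [exact (Hirr _ (Htr _ _ _ h' H))|subst; exact (Hirr _ H)]. }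
  apply (Hsub _ (fun x => (M x \/ (exists z, is_succ lt x z)) \/
                          diag_union lt (fun xi => exists z, is_succ lt xi z) Xf x)).
  { apply Hun; [apply Hun; assumption|]. apply Hp; assumption. }
  intros xi Hxi.
  destruct (classic (is_limit lt xi)) as [Hl|Hl].
  - right.
    assert (HnC : ~ C xi) by (intros h; exact (HCX xi h Hxi)).
    assert (Hz : exists z, lt z xi /\ ~ exists c, C c /\ le lt z c /\ lt c xi).
    { apply NNPP; intros Hn; apply HnC; apply (Hcl xi Hl). intros z Hz.
      apply NNPP; intros Hn2; apply Hn; eauto. }
    destruct Hz as [z [Hzx Hz]].
    destruct Hl as [_ Hl]. destruct (Hl z Hzx) as [w [Hzw Hwx]].
    destruct (succ_ex K lt Hwo z w Hzw) as [s [Hzs Hss]].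
    exists s. split.
    { destruct (Hss w Hzw) as [h|h]; [exact (Htr _ _ _ h Hwx)|subst; exact Hwx]. }
    split; [exists z; split; assumption|].
    intros c Hc Hcx.
    destruct (Htri c z) as [h|[h|h]]; [exact (Htr _ _ _ h Hzs)|subst; exact Hzs|].
    exfalso; apply Hz; exists c; split; [exact Hc|split; [left; exact h|exact Hcx]].
  - left.
    destruct (classic (exists z, lt z xi)) as [[z Hz]|Hn].
    + right.
      assert (Hw : exists z', lt z' xi /\ ~ exists w, lt z' w /\ lt w xi).
      { apply NNPP; intros Hn. apply Hl. split; [eauto|]. intros z' Hz'.
        apply NNPP; intros Hn2; apply Hn; eauto. }
      destruct Hw as [z' [Hz' Hnw]]. exists z'. split; [exact Hz'|].
      intros y Hy. destruct (Htri xi y) as [h|[h|h]]; [left; exact h|right; exact h|].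
      exfalso; apply Hnw; eauto.
    + left. intros z h; apply Hn; eauto.
Qed.

Lemma normal_J (K : Type) (lt : K -> K -> Prop) (Hwo : strict_wellorder lt)
  (Hreg : regular_cardinal lt) (Hunc : uncountable (K := K))
  (J : (K -> Prop) -> Prop) (HJ : is_ideal lt J) (Hp : pleasant lt J) (HL : J (L_set lt)) :
  normal_ideal lt J.
Proof.
  intros Xf HX.
  pose proof Hwo as [Hirr [Htr [Htri Hwf]]].
  pose proof HJ as [Hsub [Hun [Hcomp _]]].
  pose proof (succ_J K lt Hwo Hreg Hunc J HJ Hp HL) as HS.
  set (Yf := fun b x => (exists a, lt a b /\ Xf a x) \/ Xf b x).
  assert (HY : forall b, J (Yf b)).
  { intros b. apply Hun; [|apply HX]. apply Hcomp. intros; apply HX. }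
  apply (Hsub _ (fun x => diag_union lt (fun xi => exists z, is_succ lt xi z) Yf x \/
                          (exists z, is_succ lt x z))).
  { apply Hun; [apply Hp; assumption|exact HS]. }
  intros xi [a [Hax [_ Hxa]]].
  destruct (succ_ex K lt Hwo a xi Hax) as [s [Has Hss]].
  destruct (Hss xi Hax) as [h|h].
  - left. exists s. split; [exact h|]. split; [exists a; split; assumption|].
    left. exists a; split; assumption.
  - right. exists a. subst; split; assumption.
Qed.

Theorem theorem3p7 (K : Type) (lt : K -> K -> Prop)
  (Hwo : strict_wellorder lt) (Hreg : regular_cardinal lt)
  (Hunc : uncountable (K := K))
  (I : (K -> Prop) -> Prop) (HI : is_ideal lt I) (HL : I (L_set lt)) :
  (forall X : K -> Prop, nonstationary lt X -> pleasant_closure lt I X) /\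
  normal_ideal lt (pleasant_closure lt I).
Proof.
  split.
  - intros X HX J HJ Hp HIJ. exact (ns_J K lt Hwo Hreg Hunc J HJ Hp (HIJ _ HL) X HX).
  - intros Xf HX J HJ Hp HIJ.
    apply (normal_J K lt Hwo Hreg Hunc J HJ Hp (HIJ _ HL)).
    intros a; apply (HX a J HJ Hp HIJ).
Qed.
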